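(* Let $f:\Delta_{\mathcal Y}\to\mathbb R$ be permutation-invariant and convex ($\mathcal Y=\{1,\dots,n\}$), and let $F:\mathrm{Dens}(\mathcal X)\to\mathbb R$ be $F(\rho)=f(\lambda(\rho))$. Then for every $\lambda\in\Delta_{\mathcal Y}$, every unitary $U$ on $\mathcal X=\mathbb C^n$, and every $d\in(\mathbb R\cup\{-\infty\})^n$: $d\in\overline\partial f(\lambda)$ if and only if $U\,\mathrm{Diag}(d)\,U^*\in\overline\partial F(U\,\mathrm{Diag}(\lambda)\,U^* )$.
   Context: $\lambda(A)$ is the vector of eigenvalues of a Hermitian $A$ in decreasing order; $\mathrm{Dens}(\mathcal X)$ the $n\times n$ density matrices, $\langle X,Y\rangle=\mathrm{Tr}(X^*Y)$. $f$ is permutation-invariant if $f(\pi p)=f(p)$ for all permutations $\pi$, $(\pi p)_y=p_{\pi_y}$. For $d\in(\mathbb R\cup\{-\infty\})^n$ and $x\in\mathbb R^n$, $\langle d,x\rangle=\sum_{y:d_y\in\mathbb R}d_yx_y-\infty\sum_{y:d_y=-\infty}x_y$ (with $-\infty\cdot0=0$). For unitary $U$ with columns $u_1,\dots,u_n$, $U\mathrm{Diag}(d)U^*$ denotes the extended Hermitian matrix $A-\infty B$ with $A=\sum_{d_y\in\mathbb R}d_yu_yu_y^*$, $B=\sum_{d_y=-\infty}u_yu_y^*$, acting by $\langle A-\infty B,X\rangle=\langle A,X\rangle-\infty\langle B,X\rangle$. For convex $G:C\to\mathbb R$, $\overline\partial G(x)$ is the set of such extended linear functionals $d$ with $G(x')\ge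 G(x)+\langle d,x'-x\rangle$ for all $x'\in C$ (here $C=\Delta_{\mathcal Y}$, resp. $C=\mathrm{Dens}(\mathcal X)$). *)

(* Defs.v *)
From HB Require Import structures.
From mathcomp Require Import all_boot all_order all_algebra all_fingroup.
From mathcomp Require Import all_classical reals ereal.
From mathcomp Require Import complex.
Set Implicit Arguments. Unset Strict Implicit. Unset Printing Implicit Defensive.
Import Order.TTheory GRing.Theory Num.Theory.
Local Open Scope ring_scope.

Definition adjmx (R : realType) (m k : nat) (A : 'M[R[i]]_(m, k)) : 'M[R[i]]_(k, m) :=
  (map_mx (@conjc R) A)^T.

Section Defs.
Variables (R : realType) (n : nat).
Local Notation C := (R[i]).

Definition simplex : set 'rV[R]_n :=
  [set p | (forall y, 0 <= p 0 y) /\ \sum_y p 0 y = 1].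

Definition perm_vec (s : 'S_n) (p : 'rV[R]_n) : 'rV[R]_n := \row_y p 0 (s y).

Definition perm_invariant (f : 'rV[R]_n -> R) : Prop :=
  forall (s : 'S_n) (p : 'rV[R]_n), p \in simplex -> f (perm_vec s p) = f p.

Definition convex_on_simplex (f : 'rV[R]_n -> R) : Prop :=
  forall (p q : 'rV[R]_n) (t : R), p \in simplex -> q \in simplex ->
    0 <= t <= 1 -> f (t *: p + (1 - t) *: q) <= t * f p + (1 - t) * f q.

(* <d, x> for d in (R u {-oo})^n, with -oo * 0 = 0 *)
Definition ext_pair (d : 'I_n -> \bar R) (x : 'rV[R]_n) : \bar R :=
  ((\sum_(y | d y \is a fin_num) fine (d y) * x 0 y)%:E
   + (-oo * (\sum_(y | d y == -oo) x 0 y)%:E))%E.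

Definition ext_subdiff_vec (f : 'rV[R]_n -> R) (x : 'rV[R]_n)
    (d : 'I_n -> \bar R) : Prop :=
  forall x', x' \in simplex -> ((f x)%:E + ext_pair d (x' - x) <= (f x')%:E)%E.


Definition unitary (U : 'M[C]_n) : Prop := U *m adjmx U = 1%:M.

Definition hermitian (A : 'M[C]_n) : Prop := adjmx A = A.

Definition dens : set 'M[C]_n :=
  [set rho | hermitian rho /\
     (forall v : 'cV[C]_n, 0 <= (adjmx v *m rho *m v) 0 0)
     /\ \tr rho = 1].

(* <X, Y> = Tr(X^* Y), real part (real for Hermitian X, Y) *)
Definition hs_pair (X Y : 'M[C]_n) : R := complex.Re (\tr (adjmx X *m Y)).

(* extended Hermitian matrix A - oo B, represented by the pair (A, B) *)
Definition ext_mx_pair (AB : 'M[C]_n * 'M[C]_n) (X : 'M[C]_n) : \bar R :=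
  ((hs_pair AB.1 X)%:E + (-oo * (hs_pair AB.2 X)%:E))%E.

Definition ext_subdiff_mx (G : 'M[C]_n -> R) (x : 'M[C]_n)
    (AB : 'M[C]_n * 'M[C]_n) : Prop :=
  forall x', x' \in dens -> ((G x)%:E + ext_mx_pair AB (x' - x) <= (G x')%:E)%E.

Definition conj_diag (U : 'M[C]_n) (l : 'rV[R]_n) : 'M[C]_n :=
  U *m diag_mx (map_mx (fun x : R => x%:C)%C l) *m adjmx U.

(* U Diag(d) U^* for d in (R u {-oo})^n : the pair (A, B) of A - oo B *)
Definition ext_conj_diag (U : 'M[C]_n) (d : 'I_n -> \bar R)
    : 'M[C]_n * 'M[C]_n :=
  (\sum_(y | d y \is a fin_num) (fine (d y))%:C%C *: (col y U *m adjmx (col y U)),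
   \sum_(y | d y == -oo%E) (col y U *m adjmx (col y U))).

Definition is_eigvec_sorted (A : 'M[C]_n) (l : 'rV[R]_n) : Prop :=
  (forall i j : 'I_n, (i <= j)%N -> l 0 j <= l 0 i) /\
  char_poly A = \prod_(i < n) ('X - ((l 0 i)%:C%C)%:P).

Definition eigvals (A : 'M[C]_n) : 'rV[R]_n := xget 0 (is_eigvec_sorted A).

Definition spectral_fun (f : 'rV[R]_n -> R) (rho : 'M[C]_n) : R :=
  f (eigvals rho).

End Defs.

(* Main.v *)
Require Import Defs.
From HB Require Import structures.
From mathcomp Require Import all_boot all_order all_algebra all_fingroup.
From mathcomp Require Import all_classical reals ereal.
From mathcomp Require Import complex.
From mathcomp Require Import ring lra.
Import Order.TTheory GRing.Theory Num.Theory.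
Local Open Scope ring_scope.

Section Mx.
Variables (R : realType).
Local Notation C := (R[i]).

Lemma adjmxE m k (A : 'M[C]_(m,k)) i j : adjmx A i j = conjc (A j i).
Proof. by rewrite /adjmx !mxE. Qed.

Lemma adjmx_mul m p q (A : 'M[C]_(m,p)) (B : 'M[C]_(p,q)) :
  adjmx (A *m B) = adjmx B *m adjmx A.
Proof.
apply/matrixP=> i j; rewrite adjmxE !mxE rmorph_sum; apply: eq_bigr => k _.
by rewrite !adjmxE rmorphM mulrC.
Qed.

Lemma adjmxK m k (A : 'M[C]_(m,k)) : adjmx (adjmx A) = A.
Proof. by apply/matrixP=> i j; rewrite !adjmxE conjcK. Qed.

Lemma adjmxD m k (A B : 'M[C]_(m,k)) : adjmx (A + B) = adjmx A + adjmx B.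
Proof. by apply/matrixP=> i j; rewrite [LHS]adjmxE !mxE ?adjmxE rmorphD. Qed.

Lemma adjmx0 m k : adjmx (0 : 'M[C]_(m,k)) = 0.
Proof. by apply/matrixP=> i j; rewrite adjmxE !mxE ?rmorph0. Qed.

Lemma conjc_realM (c : R) (x : C) : conjc ((c%:C)%C * x) = (c%:C)%C * conjc x.
Proof. by case: x => a b /=; congr (_ +i* _)%C; ring. Qed.

Lemma adjmxZ m k (c : R) (A : 'M[C]_(m,k)) : adjmx ((c%:C)%C *: A) = (c%:C)%C *: adjmx A.
Proof. by apply/matrixP=> i j; rewrite adjmxE !mxE ?adjmxE conjc_realM. Qed.

Lemma unitaryC n (U : 'M[C]_n) : unitary U -> adjmx U *m U = 1%:M.
Proof. by move=> H; apply: mulmx1C. Qed.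

Lemma Re0 : complex.Re (0 : C) = 0. Proof. by []. Qed.
Lemma Re1 : complex.Re (1 : C) = 1. Proof. by []. Qed.
Lemma ReD (x y : C) : complex.Re (x + y) = complex.Re x + complex.Re y.
Proof. by case: x; case: y. Qed.
Lemma ReB (x y : C) : complex.Re (x - y) = complex.Re x - complex.Re y.
Proof. by case: x; case: y. Qed.
Lemma ReM_real (c : R) (x : C) : complex.Re ((c%:C)%C * x) = c * complex.Re x.
Proof. by case: x => a b /=; rewrite mul0r subr0. Qed.
Lemma Re_sum I (r : seq I) (P : pred I) (F : I -> C) :
  complex.Re (\sum_(i <- r | P i) F i) = \sum_(i <- r | P i) complex.Re (F i).
Proof. by apply: (big_morph _ ReD Re0). Qed.
Lemma Re_ge0 (x : C) : 0 <= x -> 0 <= complex.Re x.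
Proof. by rewrite lecE => /andP[_]. Qed.
Lemma ge0_real (x : C) : 0 <= x -> x = ((complex.Re x)%:C)%C.
Proof. by move=> /ger0_Im; case: x => a b /= ->. Qed.

End Mx.
Section Rearr.
Variables (R : realType) (n : nat).

Lemma exists_max (F : 'I_n -> R) (Y : {set 'I_n}) : Y != finset.set0 ->
  exists2 y0, y0 \in Y & forall y, y \in Y -> F y <= F y0.
Proof.
case/set0Pn=> y Hy.
case: (@arg_maxP _ R _ y (mem Y) F Hy) => y0 Hy0 Hm.
by exists y0 => // z Hz; apply: Hm.
Qed.

Lemma sum_ge_term (F : 'I_n -> R) (Y : {set 'I_n}) y :
  (forall z, 0 <= F z) -> y \in Y -> F y <= \sum_(z in Y) F z.
Proof.
move=> F0 Hy; rewrite (big_setD1 y Hy) /= lerDl.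
by apply: sumr_ge0 => z _.
Qed.

Variables (w mu : 'I_n -> R).

Lemma rearr_gen (m : nat) : forall (Y K : {set 'I_n}) (P : 'I_n -> 'I_n -> R),
  #|Y| = m -> #|K| = m -> (forall y k, 0 <= P y k) ->
  (forall y, y \in Y -> \sum_(k in K) P y k = 1) ->
  (forall k, k \in K -> \sum_(y in Y) P y k = 1) ->
  exists s : 'I_n -> 'I_n, [/\ (forall y, y \in Y -> s y \in K),
     {in Y &, injective s} &
     \sum_(y in Y) w y * (\sum_(k in K) P y k * mu k)
        <= \sum_(y in Y) w y * mu (s y)].
Proof.
elim: m => [|m IH] Y K P cY cK P0 Prow Pcol.
  exists id; rewrite (cards0_eq cY) (cards0_eq cK); split.
  - by move=> y; rewrite inE.
  - by move=> y z; rewrite inE.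
  - by rewrite !big_set0.
have Yn0 : Y != finset.set0 by rewrite -card_gt0 cY.
have Kn0 : K != finset.set0 by rewrite -card_gt0 cK.
have [y0 Hy0 wmax] := exists_max w Y Yn0.
have [k0 Hk0 mmax] := exists_max mu K Kn0.
set Y' := Y :\ y0; set K' := K :\ k0.
set s0 := 1 - P y0 k0.
have f1 : s0 = \sum_(y in Y') P y k0.
  by rewrite /s0 -(Pcol k0 Hk0) (big_setD1 y0 Hy0) /=; ring.
have f2 : s0 = \sum_(k in K') P y0 k.
  by rewrite /s0 -(Prow y0 Hy0) (big_setD1 k0 Hk0) /=; ring.
have s0ge : 0 <= s0 by rewrite f1; apply: sumr_ge0.
have aleq y : y \in Y' -> P y k0 <= s0.
  by move=> Hy; rewrite f1; apply: (sum_ge_term (fun z => P z k0)).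
have bleq k : k \in K' -> P y0 k <= s0.
  by move=> Hk; rewrite f2; apply: (sum_ge_term (fun z => P y0 z)).
have divK (x : R) : 0 <= x <= s0 -> x / s0 * s0 = x.
  case/andP=> x0 xs.
  have [s0z|sn0] := eqVneq s0 0; last by rewrite divfK.
  rewrite s0z in xs *.
  have -> : x = 0 by apply/eqP; rewrite eq_le x0 xs.
  by rewrite mulr0.
set P' := fun y k => P y k + P y k0 / s0 * P y0 k.
have cY' : #|Y'| = m by move: (cardsD1 y0 Y); rewrite Hy0 cY add1n => -[].
have cK' : #|K'| = m by move: (cardsD1 k0 K); rewrite Hk0 cK add1n => -[].
have P'0 y k : 0 <= P' y k.
  by rewrite /P' addr_ge0 // mulr_ge0 // divr_ge0.
have P'row y : y \in Y' -> \sum_(k in K') P' y k = 1.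
  move=> Hy; rewrite /P' big_split /= -mulr_sumr -f2 divK; last first.
    by rewrite P0 aleq.
  have Hy1 : y \in Y by move: Hy; rewrite inE => /andP[].
  by rewrite -(Prow y Hy1) (big_setD1 k0 Hk0) /= addrC.
have P'col k : k \in K' -> \sum_(y in Y') P' y k = 1.
  move=> Hk; rewrite /P' big_split /= -mulr_suml -mulr_suml -f1.
  have -> : s0 / s0 * P y0 k = P y0 k.
    have [s0z|sn0] := eqVneq s0 0; last by rewrite divff // mul1r.
    have := bleq k Hk; rewrite s0z => Hb.
    have -> : P y0 k = 0 by apply/eqP; rewrite eq_le P0 Hb.
    by rewrite mulr0.
  have Hk1 : k \in K by move: Hk; rewrite inE => /andP[].
  by rewrite -(Pcol k Hk1) (big_setD1 y0 Hy0) /= addrC.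
have [s' [s'K s'inj s'le]] := IH Y' K' P' cY' cK' P'0 P'row P'col.
exists (fun y => if y == y0 then k0 else s' y); split.
- move=> y Hy; case: eqP => // /eqP yn.
  have : s' y \in K' by apply: s'K; rewrite /Y' !inE yn Hy.
  by rewrite /K' !inE => /andP[].
- move=> y z Hy Hz /=.
  case: (eqVneq y y0) => [->|yn]; case: (eqVneq z y0) => [->|zn] //.
  + move=> E; have : s' z \in K' by apply: s'K; rewrite /Y' !inE zn Hz.
    by rewrite -E /K' !inE eqxx.
  + move=> E; have : s' y \in K' by apply: s'K; rewrite /Y' !inE yn Hy.
    by rewrite E /K' !inE eqxx.
  + by apply: s'inj; rewrite /Y' !inE ?yn ?zn.
rewrite (big_setD1 y0 Hy0) [in X in _ <= X](big_setD1 y0 Hy0) /= eqxx -/Y'.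
rewrite [X in _ <= _ + X](eq_bigr (fun y => w y * mu (s' y))); last first.
  by move=> y; rewrite /Y' !inE => /andP[/negbTE -> _].
apply: le_trans (lerD (lexx _) s'le).
set A := \sum_(y in Y') w y * P y k0.
set B := \sum_(k in K') P y0 k * mu k.
set T := \sum_(y in Y') w y * (\sum_(k in K') P y k * mu k).
have EV : \sum_(y in Y') w y * (\sum_(k in K) P y k * mu k) = A * mu k0 + T.
  rewrite /A /T mulr_suml -big_split /=; apply: eq_bigr => y _.
  rewrite (big_setD1 k0 Hk0) /=; ring.
have EV' : \sum_(y in Y') w y * (\sum_(k in K') P' y k * mu k) = T + A / s0 * B.
  rewrite /A -mulrA mulr_suml /T -big_split /=; apply: eq_bigr => y _.
  rewrite /P' (eq_bigr (fun k => P y k * mu k + P y k0 / s0 * (P y0 k * mu k))); last by move=> k _; ring.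
  rewrite big_split /= -mulr_sumr /B; ring.
rewrite EV EV' (big_setD1 k0 Hk0) /= -/K' -/B.
have Ale : A <= w y0 * s0.
  rewrite f1 mulr_sumr; apply: ler_sum => y Hy; apply: ler_wpM2r => //.
  by apply: wmax; move: Hy; rewrite inE => /andP[].
have Ble : B <= mu k0 * s0.
  rewrite f2 mulr_sumr; apply: ler_sum => k Hk; rewrite [X in X <= _]mulrC; apply: ler_wpM2r => //.
  by apply: mmax; move: Hk; rewrite inE => /andP[].
have Pe : P y0 k0 = 1 - s0 by rewrite /s0; ring.
rewrite Pe.
have [s0z|s0p] := eqVneq s0 0.
  have A0 : A = 0.
    rewrite /A big1 // => y Hy.
    have : P y k0 = 0 by apply/eqP; rewrite eq_le P0 andbT -s0z aleq.
    by move=> ->; rewrite mulr0.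
  have B0 : B = 0.
    rewrite /B big1 // => k Hk.
    have : P y0 k = 0 by apply/eqP; rewrite eq_le P0 andbT -s0z bleq.
    by move=> ->; rewrite mul0r.
  rewrite A0 B0 s0z; lra.
have key : w y0 * mu k0 + (T + A / s0 * B) - (w y0 * ((1 - s0) * mu k0 + B) + (A * mu k0 + T))
   = (w y0 * s0 - A) * (mu k0 * s0 - B) / s0 by field.
have nn : 0 <= (w y0 * s0 - A) * (mu k0 * s0 - B) / s0.
  by apply: divr_ge0 => //; apply: mulr_ge0; lra.
lra.
Qed.

End Rearr.

Section Main1.
Variables (R : realType) (n : nat).
Local Notation C := (R[i]).

Definition dg (U X : 'M[C]_n) (y : 'I_n) : C := (adjmx U *m X *m U) y y.
Definition zrow (U X : 'M[C]_n) : 'rV[R]_n := \row_y complex.Re (dg U X y).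

Lemma dg_col (U X : 'M[C]_n) y : (adjmx (col y U) *m X *m col y U) 0 0 = dg U X y.
Proof.
rewrite /dg !mxE; apply: eq_bigr => k _; rewrite !mxE; congr (_ * _).
by apply: eq_bigr => j _; rewrite !mxE.
Qed.

Lemma hs_pairD (A B X : 'M[C]_n) : hs_pair (A + B) X = hs_pair A X + hs_pair B X.
Proof. by rewrite /hs_pair adjmxD mulmxDl mxtraceD ReD. Qed.

Lemma hs_pair0 (X : 'M[C]_n) : hs_pair 0 X = 0.
Proof. by rewrite /hs_pair adjmx0 mul0mx mxtrace0. Qed.

Lemma hs_pair_sum I (r : seq I) (P : pred I) (F : I -> 'M[C]_n) X :
  hs_pair (\sum_(i <- r | P i) F i) X = \sum_(i <- r | P i) hs_pair (F i) X.
Proof. by apply: (big_morph (fun A => hs_pair A X) (fun A B => hs_pairD A B X) (hs_pair0 X)). Qed.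

Lemma hs_pairZ (c : R) (A X : 'M[C]_n) : hs_pair ((c%:C)%C *: A) X = c * hs_pair A X.
Proof. by rewrite /hs_pair adjmxZ -scalemxAl mxtraceZ ReM_real. Qed.

Lemma hs_pair_proj (U X : 'M[C]_n) y :
  hs_pair (col y U *m adjmx (col y U)) X = complex.Re (dg U X y).
Proof.
rewrite /hs_pair adjmx_mul adjmxK -mulmxA mxtrace_mulC trace_mx11 -dg_col.
by [].
Qed.

Lemma hs_ecd1 (U X : 'M[C]_n) d :
  hs_pair (ext_conj_diag U d).1 X =
  \sum_(y | d y \is a fin_num) fine (d y) * complex.Re (dg U X y).
Proof.
by rewrite /= hs_pair_sum; apply: eq_bigr => y _; rewrite hs_pairZ hs_pair_proj.
Qed.

Lemma hs_ecd2 (U X : 'M[C]_n) d :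
  hs_pair (ext_conj_diag U d).2 X =
  \sum_(y | d y == -oo%E) complex.Re (dg U X y).
Proof. by rewrite /= hs_pair_sum; apply: eq_bigr => y _; rewrite hs_pair_proj. Qed.

Lemma dgB (U X Y : 'M[C]_n) y : dg U (X - Y) y = dg U X y - dg U Y y.
Proof. by rewrite /dg mulmxBr mulmxBl !mxE. Qed.

Lemma dg_conj (U : 'M[C]_n) (v : 'rV[R]_n) y : unitary U ->
  dg U (conj_diag U v) y = ((v 0 y)%:C)%C.
Proof.
move=> Uu; rewrite /dg /conj_diag !mulmxA unitaryC // mul1mx -mulmxA unitaryC //.
by rewrite mulmx1 !mxE eqxx mulr1n.
Qed.

Lemma zrow_conj (U : 'M[C]_n) (v : 'rV[R]_n) : unitary U -> zrow U (conj_diag U v) = v.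
Proof. by move=> Uu; apply/rowP=> y; rewrite mxE dg_conj. Qed.

Lemma pairE (U X : 'M[C]_n) (lam : 'rV[R]_n) d : unitary U ->
  ext_mx_pair (ext_conj_diag U d) (X - conj_diag U lam) = ext_pair d (zrow U X - lam).
Proof.
move=> Uu; rewrite /ext_mx_pair /ext_pair hs_ecd1 hs_ecd2.
have e1 : \sum_(y | d y \is a fin_num) fine (d y) * complex.Re (dg U (X - conj_diag U lam) y)
  = \sum_(y | d y \is a fin_num) fine (d y) * (zrow U X - lam) 0 y.
  by apply: eq_bigr => y _; rewrite dgB ReB dg_conj // !mxE.
have e2 : \sum_(y | d y == -oo%E) complex.Re (dg U (X - conj_diag U lam) y)
  = \sum_(y | d y == -oo%E) (zrow U X - lam) 0 y.
  by apply: eq_bigr => y _; rewrite dgB ReB dg_conj // !mxE.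
by rewrite e1 e2.
Qed.

Lemma zrow_simplex (U X : 'M[C]_n) : unitary U -> X \in dens (n:=n) ->
  zrow U X \in simplex (n:=n).
Proof.
move=> Uu; rewrite !in_setE => -[_ [Xpsd Xtr]]; split.
  by move=> y; rewrite mxE -dg_col; apply: Re_ge0.
rewrite (eq_bigr (fun y => complex.Re (dg U X y))); last by move=> y _; rewrite mxE.
rewrite -Re_sum.
have -> : \sum_y dg U X y = \tr (adjmx U *m X *m U) by rewrite /mxtrace.
by rewrite mxtrace_mulC mulmxA Uu mul1mx Xtr.
Qed.

Lemma conj_diag_dens (U : 'M[C]_n) (q : 'rV[R]_n) : unitary U -> q \in simplex (n:=n) ->
  conj_diag U q \in dens (n:=n).
Proof.
move=> Uu; rewrite !in_setE => -[q0 qs]; split; [|split].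
- rewrite /Defs.hermitian /conj_diag !adjmx_mul adjmxK mulmxA; congr (_ *m _ *m _).
  apply/matrixP=> i j; rewrite adjmxE !mxE.
  case: (eqVneq i j) => [->|ne]; first by rewrite ?eqxx !mulr1n conjc_real.
  by rewrite !mulr0n conjc0.
- move=> v; rewrite /conj_diag.
  have -> : adjmx v *m (U *m diag_mx (map_mx (fun x : R => (x%:C)%C) q) *m adjmx U) *m v
     = adjmx (adjmx U *m v) *m diag_mx (map_mx (fun x : R => (x%:C)%C) q) *m (adjmx U *m v).
    by rewrite adjmx_mul adjmxK !mulmxA.
  set w := adjmx U *m v.
  rewrite mul_mx_diag !mxE; apply: sumr_ge0 => k _; rewrite !mxE ?adjmxE.
  rewrite mulrAC mulrC; apply: mulr_ge0; first by rewrite ler0c q0.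
  by rewrite mulrC; apply: mulcJ_ge0.
- rewrite /conj_diag mxtrace_mulC mulmxA unitaryC // mul1mx mxtrace_diag.
  rewrite (eq_bigr (fun i => ((q 0 i)%:C)%C)); last by move=> i _; rewrite mxE.
  by rewrite -(raddf_sum (real_complex R)) qs.
Qed.

End Main1.
Arguments dg {R n}.
Arguments zrow {R n}.

Section Eig.
Variables (R : realType) (n : nat).
Local Notation C := (R[i]).

Lemma perm_of_perm_eq (a b : 'I_n -> R) :
  perm_eq (map a (enum 'I_n)) (map b (enum 'I_n)) -> exists p : 'S_n, forall i, a i = b (p i).
Proof.
move=> H.
have Ht : perm_eq (map a (enum 'I_n)) [tuple b i | i < n].
  by rewrite /= -[X in perm_eq _ X]/(map b (enum 'I_n)).
case/tuple_permP: Ht => p Hp.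
exists p => i.
have := congr1 (fun s => nth 0 s i) Hp.
rewrite nth_mktuple (nth_map i) ?size_enum_ord ?ltn_ord // nth_ord_enum.
by rewrite tnth_mktuple.
Qed.

Lemma prodX_map (F : 'I_n -> C) :
  \prod_(x <- map F (enum 'I_n)) ('X - x%:P) = \prod_i ('X - (F i)%:P).
Proof. by rewrite big_map big_enum. Qed.

Lemma char_sim (A B M : 'M[C]_n) : B *m A = 1%:M -> char_poly (A *m M *m B) = char_poly M.
Proof.
move=> BA; have AB : A *m B = 1%:M by apply: mulmx1C.
rewrite /char_poly /char_poly_mx.
have -> : 'X%:M - map_mx polyC (A *m M *m B) =
    map_mx polyC A *m ('X%:M - map_mx polyC M) *m map_mx polyC B.
  have AB' : map_mx polyC A *m map_mx polyC B = 1%:M by rewrite -map_mxM AB map_mx1.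
  by rewrite !map_mxM mulmxBr mulmxBl mul_mx_scalar -scalemxAl AB' scalemx1.
have AB' : map_mx polyC A *m map_mx polyC B = 1%:M by rewrite -map_mxM AB map_mx1.
by rewrite !det_mulmx mulrAC -det_mulmx AB' det1 mul1r.
Qed.

Lemma char_conj_diag (V : 'M[C]_n) (mu : 'rV[R]_n) : unitary V ->
  char_poly (conj_diag V mu) = \prod_(i < n) ('X - ((mu 0 i)%:C%C)%:P).
Proof.
move=> Vu; rewrite /conj_diag char_sim; last exact: unitaryC.
rewrite char_poly_trig; last exact: diag_mx_is_trig.
by apply: eq_bigr => i _; rewrite !mxE eqxx mulr1n.
Qed.

Lemma eig_perm (V : 'M[C]_n) (mu : 'rV[R]_n) : unitary V ->
  exists p : 'S_n, eigvals (conj_diag V mu) = perm_vec p mu.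
Proof.
move=> Vu; have Hc := char_conj_diag V mu Vu.
set X := conj_diag V mu.
have Hex : exists l, is_eigvec_sorted X l.
  set leT := fun x y : R => y <= x.
  set s := sort leT (map (mu 0) (enum 'I_n)).
  have Hps : perm_eq s (map (mu 0) (enum 'I_n)) by rewrite /s perm_sort.
  have Hsz : size s = n by rewrite /s size_sort size_map size_enum_ord.
  have Hs : forall i : 'I_n, nth 0 s i = nth 0 s i by [].
  have Hpe0 : perm_eq (map (fun i : 'I_n => nth 0 s i) (enum 'I_n)) (map (mu 0) (enum 'I_n)).
    have -> : map (fun i : 'I_n => nth 0 s i) (enum 'I_n) = s; last by [].
    apply: (@eq_from_nth _ 0); rewrite size_map size_enum_ord ?Hsz // => i Hi.
    by rewrite (nth_map (Ordinal Hi)) ?size_enum_ord // nth_enum_ord.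
  have [p Hp] := @perm_of_perm_eq (fun i => nth 0 s i) (mu 0) Hpe0.
  exists (perm_vec p mu); split.
  - move=> i j Hij; rewrite !mxE -!Hp.
    have Hsort : sorted leT s by apply: sort_sorted => x y; apply: le_total.
    apply: (sorted_leq_nth (leT := leT)) => //.
    + by move=> y x z; rewrite /leT => ? ?; apply: le_trans; eauto.
    + by move=> x; rewrite /leT.
    + by rewrite inE Hsz ltn_ord.
    + by rewrite inE Hsz ltn_ord.
  - rewrite Hc (reindex_inj (@perm_inj _ p)) /=.
    by apply: eq_bigr => i _; rewrite !mxE.
have [_ Hl] := xgetPex 0 Hex.
rewrite -/(eigvals X) Hc in Hl.
have Hpe : perm_eq (map (fun i => eigvals X 0 i) (enum 'I_n)) (map (mu 0) (enum 'I_n)).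
  apply: (perm_map_inj (@complexI R)).
  have E1 : map (real_complex R) (map (fun i => eigvals X 0 i) (enum 'I_n))
     = map (fun i => (eigvals X 0 i)%:C%C) (enum 'I_n) by rewrite -map_comp.
  have E2 : map (real_complex R) (map (mu 0) (enum 'I_n))
     = map (fun i => (mu 0 i)%:C%C) (enum 'I_n) by rewrite -map_comp.
  rewrite E1 E2; apply: prod_XsubC_eq; rewrite !prodX_map; exact: esym.
have [p Hp] := @perm_of_perm_eq (fun i => eigvals X 0 i) (mu 0) Hpe.
by exists p; apply/rowP => i; rewrite mxE Hp.
Qed.

End Eig.

Section Spec.
Variables (R : realType) (n : nat).
Local Notation C := (R[i]).

Lemma tstar m k (A : 'M[C]_(m,k)) : map_mx Num.conj (A^T) = adjmx A.
Proof. by apply/matrixP=> i j; rewrite !mxE. Qed.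

Lemma dg_diag (V : 'M[C]_n) (s : 'rV[C]_n) k : unitary V ->
  dg V (V *m diag_mx s *m adjmx V) k = s 0 k.
Proof.
move=> Vu; rewrite /dg !mulmxA unitaryC // mul1mx -mulmxA unitaryC //.
by rewrite mulmx1 !mxE eqxx mulr1n.
Qed.

Lemma spectral_dens (X : 'M[C]_n) : X \in dens (n:=n) ->
  exists V mu, unitary V /\ X = conj_diag V mu.
Proof.
move=> HX; have := HX; rewrite in_setE => -[Xh [Xpsd _]].
have Xn : X \is normalmx.
  apply/normalmxP; rewrite tstar.
  by move: Xh; rewrite /Defs.hermitian => ->.
have XE := orthomx_spectralP Xn.
set P := spectralmx X in XE; set sp := spectral_diag X in XE.
have Pu : P \is unitarymx by apply: spectral_unitarymx.
have PP : P *m adjmx P = 1%:M by rewrite -tstar; apply/unitarymxP.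
rewrite invmx_unitary // tstar in XE.
set V := adjmx P in XE.
have Vu : unitary V by rewrite /unitary /V adjmxK; apply: mulmx1C.
have XE' : X = V *m diag_mx sp *m adjmx V by rewrite XE /V adjmxK.
exists V, (zrow V X); split => //.
rewrite /conj_diag {1}XE'; congr (_ *m diag_mx _ *m _).
apply/rowP => k; rewrite !mxE.
have Hdg : dg V X k = sp 0 k by rewrite {1}XE' dg_diag.
rewrite -Hdg; apply: ge0_real; rewrite -dg_col; apply: Xpsd.
Qed.

End Spec.

Section Key.
Variables (R : realType) (n : nat).
Local Notation C := (R[i]).

Lemma rearr (w mu : 'I_n -> R) (P : 'I_n -> 'I_n -> R) :
  (forall y k, 0 <= P y k) -> (forall y, \sum_k P y k = 1) -> (forall k, \sum_y P y k = 1) ->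
  exists s : 'S_n, \sum_y w y * (\sum_k P y k * mu k) <= \sum_y w y * mu (s y).
Proof.
move=> P0 Prow Pcol.
have eT (F : 'I_n -> R) : \sum_(y in finset.setT) F y = \sum_y F y.
  by apply: eq_bigl => y; rewrite finset.in_setT.
have cT : #|(finset.setT : {set 'I_n})| = n by rewrite cardsT card_ord.
have [s [_ sinj sle]] := @rearr_gen R n w mu n finset.setT finset.setT P
  cT cT P0
  (fun y _ => etrans (eT _) (Prow y)) (fun k _ => etrans (eT _) (Pcol k)).
have sinj' : injective s by move=> x y; apply: sinj; rewrite finset.in_setT.
exists (perm sinj').
have E1 : \sum_y w y * (\sum_k P y k * mu k) =
  \sum_(y in finset.setT) w y * (\sum_(k in finset.setT) P y k * mu k).
  by rewrite eT; apply: eq_bigr => y _; rewrite eT.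
have E2 : \sum_y w y * mu (perm sinj' y) = \sum_(y in finset.setT) w y * mu (s y).
  by rewrite eT; apply: eq_bigr => y _; rewrite permE.
by rewrite E1 E2.
Qed.

End Key.

Section Key2.
Variables (R : realType) (n : nat).

Lemma finN (d : 'I_n -> \bar R) y : d y != +oo%E -> (d y == -oo%E) = ~~ (d y \is a fin_num).
Proof. by case: (d y). Qed.

Lemma sum_split (d : 'I_n -> \bar R) (F : 'I_n -> R) : (forall y, d y != +oo%E) ->
  \sum_y F y = \sum_(y | d y \is a fin_num) F y + \sum_(y | d y == -oo%E) F y.
Proof.
move=> Hd; rewrite (bigID (fun y => d y \is a fin_num)) /=; congr (_ + _).
by apply: eq_bigl => y; rewrite finN.
Qed.

Lemma le_sum1 (x : 'rV[R]_n) k : x \in simplex (n:=n) -> 0 <= x 0 k <= 1.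
Proof.
rewrite in_setE => -[x0 xs]; rewrite x0 -xs /= (bigD1 k) //= lerDl.
by apply: sumr_ge0 => y _.
Qed.

Lemma Babs (d : 'I_n -> \bar R) (x : 'I_n -> R) : (forall y, 0 <= x y <= 1) ->
  `| \sum_(y | d y \is a fin_num) fine (d y) * x y | <= \sum_(y | d y \is a fin_num) `|fine (d y)|.
Proof.
move=> Hx; apply: le_trans (ler_norm_sum _ _ _) _; apply: ler_sum => y _.
have /andP[x0 x1] := Hx y.
rewrite normrM (ger0_norm x0); rewrite -[X in _ <= X]mulr1; exact: ler_wpM2l.
Qed.

Lemma key (lam z mu : 'rV[R]_n) (d : 'I_n -> \bar R) (P : 'I_n -> 'I_n -> R) :
  (forall y, d y != +oo%E) ->
  z \in simplex (n:=n) -> mu \in simplex (n:=n) -> lam \in simplex (n:=n) ->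
  (forall y k, 0 <= P y k) -> (forall y, \sum_k P y k = 1) -> (forall k, \sum_y P y k = 1) ->
  (forall y, z 0 y = \sum_k P y k * mu 0 k) ->
  ((forall y, d y == -oo%E) \/ (forall y, d y == -oo%E -> lam 0 y = 0)) ->
  exists s : 'S_n, (ext_pair d (z - lam) <= ext_pair d (perm_vec s mu - lam))%E.
Proof.
move=> Hd zS muS lamS P0 Prow Pcol Hz HN.
have := zS; have := muS; have := lamS; rewrite !in_setE => -[lam0 lams] [mu0 mus] [z0 zs].
case: HN => [Hall|HN].
  exists 1%g; rewrite /ext_pair.
  have Ef (x : 'rV[R]_n) : \sum_(y | d y \is a fin_num) fine (d y) * x 0 y = 0.
    by apply: big_pred0 => y; apply/negbTE; rewrite -finN //; exact: Hall.
  have EN (x : 'rV[R]_n) : \sum_(y | d y == -oo%E) x 0 y = \sum_y x 0 y.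
    by apply: eq_bigl => y; rewrite Hall.
  rewrite !Ef !EN.
  have -> : \sum_y (z - lam) 0 y = 0.
    by rewrite (eq_bigr (fun y => z 0 y - lam 0 y)) ?sumrB ?zs ?lams ?subrr // => y _; rewrite !mxE.
  have -> : \sum_y (perm_vec 1%g mu - lam) 0 y = 0.
    rewrite (eq_bigr (fun y => mu 0 y - lam 0 y)) ?sumrB ?mus ?lams ?subrr // => y _.
    by rewrite !mxE perm1.
  by [].
have EN (x : 'rV[R]_n) : \sum_(y | d y == -oo%E) (x - lam) 0 y = \sum_(y | d y == -oo%E) x 0 y.
  by apply: eq_bigr => y Hy; rewrite !mxE HN // subr0.
set Sz := \sum_(y | d y == -oo%E) z 0 y.
have Sz0 : 0 <= Sz by apply: sumr_ge0 => y _.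
have [Szpos|Szz] : 0 < Sz \/ Sz = 0.
  by case: (ltgtP 0 Sz) => [h|h|h]; [left|move: Sz0; rewrite leNgt h|right].
  exists 1%g; rewrite /ext_pair EN -/Sz mulNyr gtr0_sg // mul1e addeNy; exact: leNye.
have zN : forall y, d y == -oo%E -> z 0 y = 0.
  by apply/(psumr_eq0P (fun y _ => z0 y)); rewrite -/Sz Szz.
set Kc := \sum_(y | d y \is a fin_num) `|fine (d y)|.
set M := \sum_(k | 0 < mu 0 k) (2 * Kc + 1) / mu 0 k.
have Kc0 : 0 <= Kc by apply: sumr_ge0.
have M0 : 0 <= M.
  by apply: sumr_ge0 => k Hk; apply: divr_ge0; [lra | exact: ltW].
have Mk k : 0 < mu 0 k -> 2 * Kc + 1 <= M * mu 0 k.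
  move=> Hk; have : (2 * Kc + 1) / mu 0 k <= M.
    rewrite /M (bigD1 k) //= lerDl; apply: sumr_ge0 => j /andP[Hj _].
    by apply: divr_ge0; [lra | exact: ltW].
  move=> H; rewrite -(divfK (lt0r_neq0 Hk) (2 * Kc + 1)).
  by apply: ler_wpM2r => //; exact: ltW.
set w := fun y => if d y \is a fin_num then fine (d y) else - M.
have [s Hs] := @rearr R n w (mu 0) P P0 Prow Pcol.
have LW : \sum_y w y * (\sum_k P y k * mu 0 k) =
    \sum_(y | d y \is a fin_num) fine (d y) * z 0 y.
  rewrite (@sum_split d) // [X in _ + X]big1 ?addr0.
    by apply: eq_bigr => y Hy; rewrite /w Hy Hz.
  by move=> y Hy; rewrite -Hz zN // mulr0.
have RW : \sum_y w y * mu 0 (s y) =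
    \sum_(y | d y \is a fin_num) fine (d y) * mu 0 (s y)
    - M * \sum_(y | d y == -oo%E) mu 0 (s y).
  rewrite (@sum_split d) // mulr_sumr -sumrN.
  congr (_ + _); first by apply: eq_bigr => y Hy; rewrite /w Hy.
  apply: eq_bigr => y Hy; rewrite /w.
  by move: Hy; rewrite finN // => /negbTE ->; rewrite mulNr.
rewrite LW RW in Hs.
have Bz := @Babs d (fun y => z 0 y) (fun y => @le_sum1 z y zS).
have Bm := @Babs d (fun y => mu 0 (s y)) (fun y => @le_sum1 mu (s y) muS).
rewrite -/Kc ler_norml in Bz; rewrite -/Kc ler_norml in Bm.
have SN0 : \sum_(y | d y == -oo%E) mu 0 (s y) = 0.
  case: (pickP (fun y => (d y == -oo%E) && (0 < mu 0 (s y)))) => [y /andP[yN ypos]|Hno].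
    exfalso.
    have SN : mu 0 (s y) <= \sum_(y | d y == -oo%E) mu 0 (s y).
      by rewrite (bigD1 y) //= lerDl; apply: sumr_ge0 => j _.
    have := Mk _ ypos; have := ler_wpM2l M0 SN.
    set S1 := \sum_(y | d y \is a fin_num) fine (d y) * z 0 y in Hs Bz.
    set S2 := \sum_(y | d y \is a fin_num) fine (d y) * mu 0 (s y) in Hs Bm.
    set S3 := \sum_(y | d y == -oo%E) mu 0 (s y) in Hs SN.
    set Mm := M * mu 0 (s y); set MS := M * S3 in Hs *.
    move: Bz Bm; rewrite !le_eqVlt. 
    lra.
  apply: big1 => y yN; have := Hno y; rewrite yN /= => /negbT; rewrite -leNgt => H.
  by apply/eqP; rewrite eq_le H mu0.
rewrite SN0 mulr0 subr0 in Hs.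
exists s; rewrite /ext_pair !EN -/Sz Szz.
have -> : \sum_(y | d y == -oo%E) (perm_vec s mu) 0 y = 0.
  by rewrite -[in RHS]SN0; apply: eq_bigr => y _; rewrite mxE.
rewrite mule0 !adde0 lee_fin.
rewrite (eq_bigr (fun y => fine (d y) * z 0 y - fine (d y) * lam 0 y)); last first.
  by move=> y _; rewrite !mxE mulrBr.
rewrite [X in _ <= X](eq_bigr (fun y => fine (d y) * mu 0 (s y) - fine (d y) * lam 0 y)); last first.
  by move=> y _; rewrite !mxE mulrBr.
by rewrite !sumrB lerD2r.
Qed.

End Key2.

Section Final.
Variables (R : realType) (n : nat).
Local Notation C := (R[i]).

Lemma mix (U V : 'M[C]_n) (mu : 'rV[R]_n) : unitary U -> unitary V ->
  let W := adjmx V *m U in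
  [/\ (forall y k, 0 <= complex.Re (conjc (W k y) * W k y)),
      (forall y, \sum_k complex.Re (conjc (W k y) * W k y) = 1),
      (forall k, \sum_y complex.Re (conjc (W k y) * W k y) = 1) &
      (forall y, zrow U (conj_diag V mu) 0 y =
                 \sum_k complex.Re (conjc (W k y) * W k y) * mu 0 k)].
Proof.
move=> Uu Vu W.
have WW : adjmx W *m W = 1%:M.
  by rewrite /W adjmx_mul adjmxK !mulmxA -[adjmx U *m V *m adjmx V]mulmxA Vu mulmx1 unitaryC.
have WW' : W *m adjmx W = 1%:M by apply: mulmx1C.
split.
- move=> y k; apply: Re_ge0; rewrite mulrC; exact: mulcJ_ge0.
- move=> y; rewrite -Re_sum.
  have -> : \sum_k conjc (W k y) * W k y = (adjmx W *m W) y y.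
    by rewrite !mxE; apply: eq_bigr => k _; rewrite ?adjmxE.
  by rewrite WW !mxE eqxx mulr1n.
- move=> k; rewrite -Re_sum.
  have -> : \sum_y conjc (W k y) * W k y = (W *m adjmx W) k k.
    by rewrite !mxE; apply: eq_bigr => y _; rewrite ?adjmxE mulrC.
  by rewrite WW' !mxE eqxx mulr1n.
- move=> y; rewrite mxE /dg.
  have -> : adjmx U *m conj_diag V mu *m U =
     adjmx W *m diag_mx (map_mx (fun x : R => (x%:C)%C) mu) *m W.
    by rewrite /conj_diag /W adjmx_mul adjmxK !mulmxA.
  rewrite mul_mx_diag !mxE Re_sum; apply: eq_bigr => k _.
  rewrite !mxE ?adjmxE mulrAC mulrC ReM_real mulrC.
  by [].
Qed.

Lemma perm_vec_simplex (s : 'S_n) (mu : 'rV[R]_n) :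
  mu \in simplex (n:=n) -> perm_vec s mu \in simplex (n:=n).
Proof.
rewrite !in_setE => -[m0 ms]; split.
  by move=> y; rewrite mxE.
rewrite -ms [RHS](reindex_inj (@perm_inj _ s)) /=.
by apply: eq_bigr => y _; rewrite mxE.
Qed.

Lemma FX (f : 'rV[R]_n -> R) (V : 'M[C]_n) (mu : 'rV[R]_n) :
  perm_invariant f -> unitary V -> mu \in simplex (n:=n) ->
  spectral_fun f (conj_diag V mu) = f mu.
Proof.
move=> Hp Vu muS; rewrite /spectral_fun; have [p ->] := @eig_perm R n V mu Vu.
exact: Hp.
Qed.

End Final.

Theorem lemma4p2 (R : realType) (n : nat) (f : 'rV[R]_n -> R) :
  perm_invariant f -> convex_on_simplex f ->
  forall (lam : 'rV[R]_n) (U : 'M[R[i]]_n) (d : 'I_n -> \bar R),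
    lam \in @simplex R n -> unitary U -> (forall y, d y != +oo%E) ->
    (ext_subdiff_vec f lam d <->
     ext_subdiff_mx (spectral_fun f) (conj_diag U lam) (ext_conj_diag U d)).
Proof.
move=> Hp _ lam U d lamS Uu Hd.
have Flam := @FX R n f U lam Hp Uu lamS.
split.
- move=> Hvec x' Hx'.
  rewrite Flam pairE //.
  have [V [mu [Vu Ex]]] := @spectral_dens R n x' Hx'.
  have muS : mu \in simplex (n:=n).
    by rewrite -(@zrow_conj R n V mu Vu); apply: zrow_simplex => //; rewrite -Ex.
  have zS : zrow U x' \in simplex (n:=n) by apply: zrow_simplex.
  rewrite Ex in zS *; rewrite (@FX R n f V mu Hp Vu muS).
  have [P0 Prow Pcol Hz] := @mix R n U V mu Uu Vu.
  have HN : (forall y, d y == -oo%E) \/ (forall y, d y == -oo%E -> lam 0 y = 0).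
    case: (pickP (fun y => d y \is a fin_num)) => [j Hj|Hno]; last first.
      by left => y; rewrite finN // Hno.
    right => y yN.
    have := lamS; rewrite in_setE => -[lam0 _].
    apply/eqP; rewrite eq_le lam0 andbT leNgt; apply/negP => lpos.
    set q : 'rV[R]_n := \row_k ((k == j)%:R : R).
    have qS : q \in simplex (n:=n).
      rewrite in_setE; split; first by move=> k; rewrite mxE ler0n.
      rewrite (bigD1 j) //= mxE eqxx big1 ?addr0 // => k /negbTE kj.
      by rewrite mxE kj.
    have SN : \sum_(y | d y == -oo%E) (q - lam) 0 y < 0.
      rewrite (eq_bigr (fun y => - lam 0 y)); last first.
        move=> k kN; rewrite !mxE.
        have -> : (k == j) = false.
          apply/negbTE/eqP => E; move: kN; rewrite E finN // Hj //.
        by rewrite sub0r.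
      rewrite sumrN oppr_lt0; apply: (lt_le_trans lpos).
      by rewrite (bigD1 y) //= lerDl; apply: sumr_ge0 => k _.
    have := Hvec q qS; rewrite /ext_pair mulNyr ltr0_sg // mulN1e /= addey // addey //.
  have [s Hs] := @key R n lam (zrow U (conj_diag V mu)) mu d _ Hd zS muS lamS P0 Prow Pcol Hz HN.
  apply: le_trans (leeD2l _ Hs) _.
  rewrite -(Hp s mu muS); apply: Hvec; exact: perm_vec_simplex.
- move=> Hmx q qS.
  have := Hmx (conj_diag U q) (@conj_diag_dens R n U q Uu qS).
  by rewrite Flam pairE // zrow_conj // (@FX R n f U q Hp Uu qS).
Qed.
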